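(* For every BIMS channel with capacity $C$ and every rate $R\ge0$, the random coding exponent satisfies $$E_{\rm r}^{\rm bsc}(R;C)\le E_{\rm r}(R)\le E_{\rm r}^{\rm bec}(R;C).$$
   Context: A BIMS (binary-input memoryless symmetric) channel is a memoryless channel with input alphabet $\{x_0,x_1\}$, finite output alphabet $\mathcal Y$ and transition probabilities $P_{Y|X}(y|x)$. It is symmetric in Gallager's sense: the columns of the $2\times|\mathcal Y|$ transition matrix (rows indexed by inputs) can be partitioned into submatrices such that, in each submatrix, every row is a permutation of every other row and every column is a permutation of every other column. Inputs are equiprobable and logarithms are base 2. The capacity $C$ is $I(X;Y)$ under equiprobable inputs. For $\rho>-1$, $$F(\rho)=\sum_{x}\tfrac12\sum_{y:\,P_{Y|X}(y|x)>0}P_{Y|X}(y|x)\left(\frac{\tfrac12\sum_{x'}P_{Y|X}(y|x')^{1/(1+\rho)}}{P_{Y|X}(y|x)^{1/(1+\rho)}}\right)^{\rho},$$ and $E_0(\rho)=-\log F(\rho)$. The random coding exponent is $E_{\rm r}(R)=\max_{0\le\rho\le1}\bigl(E_0(\rho)-\rho R\bigr)$. $h$ is the binary entropy function and $h^{-1}$ its inverse on $[0,\tfrac12]$. Define $$F^{\rm bec}(\rho;C)=1+(2^{-\rho}-1)C,$$ $$F^{\rm bsc}(\rho;C)=2^{-\rho}\bigl(\varepsilon^{1/(1+\rho)}+(1-\varepsilon)^{1/(1+\rho)}\bigr)^{1+\rho},\qquad \varepsilon=h^{-1}(1-C).$$ Then $$E_{\rm r}^{\rm bec}(R;C)=\max_{0\le\rho\le1}\bigl(-\log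 F^{\rm bec}(\rho;C)-\rho R\bigr),\qquad E_{\rm r}^{\rm bsc}(R;C)=\max_{0\le\rho\le1}\bigl(-\log F^{\rm bsc}(\rho;C)-\rho R\bigr)$$ are the random coding exponents of the BEC and of the BSC of capacity $C$. *)

(* Defs.v *)
From Stdlib Require Import Reals List Permutation Arith Classical ClassicalEpsilon.
Open Scope R_scope.

Definition log2 (x : R) : R := ln x / ln 2.

(* a^b for a >= 0, with the convention 0^b = 0 (b > 0 throughout) *)
Definition rpow (a b : R) : R := if Rle_dec a 0 then 0 else Rpower a b.

(* A binary-input channel with output alphabet {0,...,n-1}:
   W x y = P_{Y|X}(y|x), inputs x0 = false, x1 = true. *)
Definition sumY (n : nat) (f : nat -> R) : R :=
  fold_right Rplus 0 (map f (seq 0 n)).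

Definition sumX (f : bool -> R) : R := f false + f true.

Definition is_channel (n : nat) (W : bool -> nat -> R) : Prop :=
  (forall x y, (y < n)%nat -> 0 <= W x y) /\
  (forall x, sumY n (W x) = 1).

(* Gallager symmetry: the columns are partitioned into classes (cls y = class
   of column y); within each class, row x1 is a permutation of row x0, and
   every column (a vector of length 2) is a permutation of every other one. *)
Definition gallager_symmetric (n : nat) (W : bool -> nat -> R) : Prop :=
  exists cls : nat -> nat,
    (forall k : nat,
       Permutation
         (map (W false) (filter (fun y => Nat.eqb (cls y) k) (seq 0 n)))
         (map (W true) (filter (fun y => Nat.eqb (cls y) k) (seq 0 n)))) /\
    (forall y y', (y < n)%nat -> (y' < n)%nat -> cls y = cls y' ->
       (W false y = W false y' /\ W true y = W true y') \/
       (W false y = W true y' /\ W true y = W false y')).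

Definition sumYpos (n : nat) (W : bool -> nat -> R) (x : bool) (g : nat -> R) : R :=
  sumY n (fun y => if Rlt_dec 0 (W x y) then g y else 0).

(* capacity = I(X;Y) with equiprobable inputs *)
Definition capacity (n : nat) (W : bool -> nat -> R) : R :=
  sumX (fun x => / 2 * sumYpos n W x (fun y =>
     W x y * log2 (W x y / (/ 2 * sumX (fun x' => W x' y))))).

Definition F (n : nat) (W : bool -> nat -> R) (rho : R) : R :=
  sumX (fun x => / 2 * sumYpos n W x (fun y =>
     W x y * Rpower
        ((/ 2 * sumX (fun x' => rpow (W x' y) (/ (1 + rho))))
           / rpow (W x y) (/ (1 + rho))) rho)).

Definition E0 (n : nat) (W : bool -> nat -> R) (rho : R) : R :=
  - log2 (F n W rho).

(* max over rho in [0,1] (realised as the least upper bound, which is attained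
   for the continuous functions considered here) *)
Definition max01 (f : R -> R) : R :=
  epsilon (inhabits 0)
    (fun m => is_lub (fun v => exists rho, 0 <= rho <= 1 /\ v = f rho) m).

Definition Er (n : nat) (W : bool -> nat -> R) (Rt : R) : R :=
  max01 (fun rho => E0 n W rho - rho * Rt).

Definition h (p : R) : R := - p * log2 p - (1 - p) * log2 (1 - p).

Definition hinv (v : R) : R :=
  epsilon (inhabits 0) (fun e => 0 <= e <= / 2 /\ h e = v).

Definition F_bec (rho C : R) : R := 1 + (Rpower 2 (- rho) - 1) * C.

Definition F_bsc (rho C : R) : R :=
  let eps := hinv (1 - C) in
  Rpower 2 (- rho) *
  Rpower (rpow eps (/ (1 + rho)) + rpow (1 - eps) (/ (1 + rho))) (1 + rho).

Definition Er_bec (Rt C : R) : R := max01 (fun rho => - log2 (F_bec rho C) - rho * Rt).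
Definition Er_bsc (Rt C : R) : R := max01 (fun rho => - log2 (F_bsc rho C) - rho * Rt).

(* Main.v *)
Require Import Defs.
From Stdlib Require Import Reals List Permutation Arith Classical ClassicalEpsilon.
From Stdlib Require Import Lra Lia Ranalysis5 FunctionalExtensionality.
From Coquelicot Require Import Coquelicot.
Open Scope R_scope.

Lemma expineq (y : R) : 0 <= y -> exp y * (2 - y) <= 2 + y.
Proof.
  intros Hy. destruct (Req_dec y 0) as [->|Hy0].
  { rewrite exp_0; lra. }
  set (g := fun z => 2 + z - exp z * (2 - z)).
  assert (Hd : forall c, 0 <= c <= y -> derivable_pt_lim g c (1 + exp c * (c - 1))).
  { intros c _. apply is_derive_Reals. unfold g. auto_derive; auto. ring. }
  destruct (MVT_cor2 g _ 0 y ltac:(lra) Hd) as [c [Hc1 Hc2]].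
  assert (Hp : 0 <= 1 + exp c * (c - 1)).
  { assert (H1 := exp_ineq1_le (- c)).
    assert (H2 : exp (-c) * exp c = 1) by (rewrite <- exp_plus; replace (-c + c) with 0 by ring; apply exp_0).
    assert (H3 : 0 < exp c) by apply exp_pos. nra. }
  unfold g in Hc1. rewrite exp_0 in Hc1. nra.
Qed.

Definition Lf (r x : R) : R :=
  r * ln (1 + exp (/(1+r) * x)) + ln (1 - exp (- (r/(1+r)) * x)) - ln x.

Lemma Lf_incr (r x y : R) : 0 < r -> 0 < x -> x <= y -> Lf r x <= Lf r y.
Proof.
  intros Hr Hx Hxy. destruct (Req_dec x y) as [<-|Hne]; [lra|].
  set (s := /(1+r)). set (a := r/(1+r)).
  assert (Hs : 0 < s) by (unfold s; apply Rinv_0_lt_compat; lra).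
  assert (Ha : 0 < a) by (unfold a; apply Rdiv_lt_0_compat; lra).
  assert (Hrs : r * s = a) by (unfold a, s; field; lra).
  assert (Hd : forall c, x <= c <= y -> derivable_pt_lim (Lf r) c
     (r * (s * exp (s * c)) / (1 + exp (s*c)) + a * exp (- a * c) / (1 - exp (- a * c)) - / c)).
  { intros c Hc. apply is_derive_Reals. unfold Lf. fold s a.
    assert (0 < exp (- a * c) < 1).
    { split. apply exp_pos. rewrite <- exp_0. apply exp_increasing. nra. }
    assert (0 < exp (s*c)) by apply exp_pos.
    auto_derive; repeat split; try lra. field; lra. }
  destruct (MVT_cor2 (Lf r) _ x y ltac:(lra) Hd) as [c [Hc1 Hc2]].
  assert (Hc : 0 < c) by lra.
  set (E := exp (s * c)). set (e := exp (a * c)).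
  assert (HE : 1 <= E). { unfold E. rewrite <- exp_0. destruct (Req_dec (s*c) 0). rewrite H; lra. left; apply exp_increasing. nra. }
  assert (He : 1 < e). { unfold e. rewrite <- exp_0. apply exp_increasing. nra. }
  assert (Hem : exp (- a * c) = / e). { unfold e. rewrite <- exp_Ropp. f_equal; ring. }
  assert (Hineq := expineq (a * c) ltac:(nra)). fold e in Hineq.
  assert (Hp : 0 <= r * (s * E) / (1 + E) + a * exp (- a * c) / (1 - exp (- a * c)) - / c).
  { rewrite Hem.
    replace (r * (s * E) / (1 + E)) with (a * E / (1+E)) by (rewrite <- Hrs; field; lra).
    replace (a * / e / (1 - / e)) with (a / (e - 1)) by (field; lra).
    assert (a * E / (1 + E) >= a / 2).
    { apply Rle_ge. apply (Rmult_le_reg_r (2 * (1+E))). lra.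
      replace (a / 2 * (2 * (1 + E))) with (a * (1+E)) by (field).
      replace (a * E / (1 + E) * (2 * (1 + E))) with (2 * a * E) by (field; lra). nra. }
    assert (0 <= a / 2 + a / (e - 1) - / c).
    { apply (Rmult_le_reg_r (2 * c * (e - 1))). nra. rewrite Rmult_0_l.
      replace ((a / 2 + a / (e - 1) - / c) * (2 * c * (e - 1))) with (a*c*(e-1) + 2*a*c - 2*(e-1)) by (field; lra).
      nra. }
    lra. }
  fold E in Hc1. nra.
Qed.

Definition Uf (r p : R) := exp (/(1+r) * ln p) + exp (/(1+r) * ln (1-p)).
Definition fS (r p : R) := exp (- r * ln 2 + (1+r) * ln (Uf r p)).
Definition Df (r p : R) :=
  fS r p * (exp (/(1+r) * ln p) / p - exp (/(1+r) * ln (1-p)) / (1-p)) / Uf r p.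
Definition hS (p : R) := (- p * ln p - (1-p) * ln (1-p)) / ln 2.
Definition Dh (p : R) := (ln (1-p) - ln p) / ln 2.
Definition Xf (p : R) := ln (1-p) - ln p.

Lemma ln2_pos : 0 < ln 2.
Proof. rewrite <- ln_1. apply ln_increasing; lra. Qed.

Lemma Uf_pos r p : 0 < Uf r p.
Proof. unfold Uf. assert (H1 := exp_pos (/(1+r) * ln p)). assert (H2 := exp_pos (/(1+r) * ln (1-p))). lra. Qed.

Lemma fS_deriv r p : -1 < r -> 0 < p < 1 -> is_derive (fS r) p (Df r p).
Proof.
  intros Hr Hp. unfold Df, fS, Uf.
  assert (H1 := exp_pos (/(1+r) * ln p)). assert (H2 := exp_pos (/(1+r) * ln (1-p))).
  auto_derive; replace (1 + - p) with (1 - p) by ring.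
  - repeat split; lra.
  - field. repeat split; lra.
Qed.

Lemma hS_deriv p : 0 < p < 1 -> is_derive hS p (Dh p).
Proof.
  intros Hp. unfold hS, Dh. assert (H := ln2_pos).
  auto_derive. repeat split; lra. replace (1 + - p) with (1 - p) by ring. field. repeat split; lra.
Qed.

Lemma exp_ln_inv p : 0 < p -> / p = exp (- ln p).
Proof. intros. rewrite exp_Ropp, exp_ln; auto. Qed.

Lemma Df_identity r p : 0 < r -> 0 < p < 1 ->
  Df r p = exp (- r * ln 2) * exp (r * ln (1 + exp (/(1+r) * Xf p))) * (1 - exp (- (r/(1+r)) * Xf p)).
Proof.
  intros Hr Hp. unfold Df, fS, Xf.
  set (s := /(1+r)). set (a := r/(1+r)).
  assert (Hsa : s - 1 = - a) by (unfold s, a; field; lra).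
  assert (Hrs : r * s = a) by (unfold a, s; field; lra).
  assert (HU := Uf_pos r p). unfold Uf in *. fold s in HU |- *.
  set (U := exp (s * ln p) + exp (s * ln (1-p))) in *.
  assert (E1 : 1 + exp (s * (ln (1 - p) - ln p)) = U * exp (- (s * ln p))).
  { unfold U. rewrite Rmult_plus_distr_r, <- !exp_plus. 
    replace (s * ln p + - (s * ln p)) with 0 by ring. rewrite exp_0. f_equal. f_equal. ring. }
  rewrite E1, ln_mult, ln_exp; auto; [|apply exp_pos].
  assert (Ea : exp (s * ln p) / p = exp (- a * ln p)).
  { rewrite <- (exp_ln p) at 2 by lra. unfold Rdiv. rewrite <- exp_Ropp, <- exp_plus. f_equal.
    rewrite <- Hsa; ring. }
  assert (Eb : exp (s * ln (1-p)) / (1-p) = exp (- a * ln (1-p))).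
  { rewrite <- (exp_ln (1-p)) at 2 by lra. unfold Rdiv. rewrite <- exp_Ropp, <- exp_plus. f_equal.
    rewrite <- Hsa; ring. }
  assert (EU : exp (- r * ln 2 + (1 + r) * ln U) / U = exp (- r * ln 2) * exp (r * ln U)).
  { rewrite <- (exp_ln U) at 2 by lra. unfold Rdiv. rewrite <- exp_Ropp, <- !exp_plus. f_equal. ring. }
  assert (Er : exp (r * (ln U + - (s * ln p))) = exp (r * ln U) * exp (- a * ln p)).
  { rewrite <- exp_plus. f_equal. rewrite <- Hrs. ring. }
  assert (Eg : exp (- a * (ln (1 - p) - ln p)) = exp (- a * ln (1-p)) * exp (a * ln p)).
  { rewrite <- exp_plus. f_equal. ring. }
  assert (Eag : exp (- a * ln p) * exp (a * ln p) = 1).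
  { rewrite <- exp_plus. replace (- a * ln p + a * ln p) with 0 by ring. apply exp_0. }
  rewrite Er, Eg.
  replace (exp (- r * ln 2 + (1 + r) * ln U) * (exp (s * ln p) / p - exp (s * ln (1 - p)) / (1 - p)) / U)
    with ((exp (- r * ln 2 + (1 + r) * ln U) / U) * (exp (s * ln p) / p - exp (s * ln (1 - p)) / (1 - p)))
    by (field; lra).
  rewrite EU, Ea, Eb.
  set (al := exp (- a * ln p)) in *. set (ga := exp (a * ln p)) in *.
  transitivity (exp (- r * ln 2) * exp (r * ln U) * (al - exp (- a * ln (1 - p)) * (al * ga))).
  { rewrite Eag. ring. }
  ring.
Qed.

Lemma exp_lt1 x : x < 0 -> exp x < 1.
Proof. intros. rewrite <- exp_0. apply exp_increasing. auto. Qed.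

Lemma exp_sub x y : exp (x - y) = exp x * / exp y.
Proof. unfold Rminus. rewrite exp_plus, exp_Ropp. reflexivity. Qed.

Lemma Xf_pos p : 0 < p < /2 -> 0 < Xf p.
Proof. intros. unfold Xf. assert (ln p < ln (1-p)) by (apply ln_increasing; lra). lra. Qed.

Lemma Xf_decr p p' : 0 < p -> p < p' -> p' < 1 -> Xf p' < Xf p.
Proof. intros. unfold Xf. assert (ln p < ln p') by (apply ln_increasing; lra).
  assert (ln (1-p') < ln (1-p)) by (apply ln_increasing; lra). lra. Qed.

Lemma Df_pos r p : 0 < r -> 0 < p < /2 -> 0 < Df r p.
Proof.
  intros Hr Hp. rewrite Df_identity by lra.
  assert (HX := Xf_pos p Hp).
  assert (0 < r/(1+r)) by (apply Rdiv_lt_0_compat; lra).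
  assert (0 < r/(1+r) * Xf p) by (apply Rmult_lt_0_compat; lra).
  assert (exp (- (r / (1 + r)) * Xf p) < 1) by (apply exp_lt1; lra).
  assert (G1 := exp_pos (- r * ln 2)). assert (G2 := exp_pos (r * ln (1 + exp (/ (1 + r) * Xf p)))).
  apply Rmult_lt_0_compat; [apply Rmult_lt_0_compat|]; lra.
Qed.

Definition qf r p := Df r p / Dh p.

Lemma qf_eq r p : 0 < r -> 0 < p < /2 -> qf r p = ln 2 * exp (- r * ln 2) * exp (Lf r (Xf p)).
Proof.
  intros Hr Hp. unfold qf. rewrite Df_identity by lra.
  assert (HX := Xf_pos p Hp). assert (H2 := ln2_pos).
  assert (0 < r/(1+r)) by (apply Rdiv_lt_0_compat; lra).
  assert (0 < r/(1+r) * Xf p) by (apply Rmult_lt_0_compat; lra).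
  assert (exp (- (r / (1 + r)) * Xf p) < 1) by (apply exp_lt1; lra).
  assert (H3 := exp_pos (/ (1 + r) * Xf p)).
  assert (EL : exp (Lf r (Xf p)) = exp (r * ln (1 + exp (/ (1 + r) * Xf p))) * (1 - exp (- (r / (1 + r)) * Xf p)) / Xf p).
  { unfold Lf. rewrite exp_sub, exp_plus.
    rewrite (exp_ln (Xf p)) by lra. rewrite exp_ln by lra. unfold Rdiv. ring. }
  rewrite EL.
  replace (Dh p) with (Xf p / ln 2) by (unfold Dh, Xf; reflexivity).
  field. lra.
Qed.

Lemma qf_mono r p p' : 0 < r -> 0 < p -> p <= p' -> p' < /2 -> qf r p' <= qf r p.
Proof.
  intros. rewrite !qf_eq by lra.
  assert (Xf p' <= Xf p). { destruct (Req_dec p p'). subst; lra. left; apply Xf_decr; lra. }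
  assert (Lf r (Xf p') <= Lf r (Xf p)) by (apply Lf_incr; auto; apply Xf_pos; lra).
  assert (exp (Lf r (Xf p')) <= exp (Lf r (Xf p))).
  { destruct H4. left; apply exp_increasing; auto. rewrite H4; lra. }
  assert (0 < ln 2 * exp (- r * ln 2)) by (apply Rmult_lt_0_compat; [apply ln2_pos|apply exp_pos]).
  apply Rmult_le_compat_l; lra.
Qed.

Definition Phi r k p := fS r p - k * hS p.

Lemma Phi_deriv r k p : -1 < r -> 0 < p < 1 -> derivable_pt_lim (Phi r k) p (Df r p - k * Dh p).
Proof.
  intros. apply is_derive_Reals. unfold Phi.
  assert (G1 := fS_deriv r p H H0). assert (G2 := hS_deriv p H0).
  assert (G3 := is_derive_scal _ _ k _ G2).
  exact (is_derive_minus _ _ _ _ _ G1 G3).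
Qed.

Lemma Phi_left r k p0 p : -1 < r -> 0 < p -> p <= p0 -> p0 < 1 ->
  (forall c, p < c < p0 -> 0 <= Df r c - k * Dh c) -> Phi r k p <= Phi r k p0.
Proof.
  intros Hr Hp Hpp H1 Hd. destruct (Req_dec p p0) as [<-|Hne]; [lra|].
  destruct (MVT_cor2 (Phi r k) (fun c => Df r c - k * Dh c) p p0 ltac:(lra)) as [c [Hc1 Hc2]].
  { intros c Hc. apply Phi_deriv; lra. }
  assert (0 <= Df r c - k * Dh c) by (apply Hd; lra). nra.
Qed.

Lemma Phi_right r k p0 p : -1 < r -> 0 < p0 -> p0 <= p -> p < 1 ->
  (forall c, p0 < c < p -> Df r c - k * Dh c <= 0) -> Phi r k p <= Phi r k p0.
Proof.
  intros Hr Hp Hpp H1 Hd. destruct (Req_dec p p0) as [->|Hne]; [lra|].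
  destruct (MVT_cor2 (Phi r k) (fun c => Df r c - k * Dh c) p0 p ltac:(lra)) as [c [Hc1 Hc2]].
  { intros c Hc. apply Phi_deriv; lra. }
  assert (Df r c - k * Dh c <= 0) by (apply Hd; lra). nra.
Qed.

Lemma Dh_pos p : 0 < p < /2 -> 0 < Dh p.
Proof. intros. unfold Dh. apply Rdiv_lt_0_compat. apply (Xf_pos p H). apply ln2_pos. Qed.

Lemma SL_open r p0 : 0 < r -> 0 < p0 <= /2 ->
  exists k, 0 <= k /\ forall p, 0 < p <= /2 -> fS r p <= fS r p0 + k * (hS p - hS p0).
Proof.
  intros Hr Hp0.
  destruct (Req_dec p0 (/2)) as [Heq|Hne].
  - exists 0. split; [lra|]. intros p Hp.
    assert (Phi r 0 p <= Phi r 0 p0).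
    { apply Phi_left; try lra. intros c Hc. assert (0 < Df r c) by (apply Df_pos; lra). lra. }
    unfold Phi in H. lra.
  - exists (qf r p0). assert (Hq : 0 <= qf r p0).
    { unfold qf. left. apply Rdiv_lt_0_compat. apply Df_pos; lra. apply Dh_pos; lra. }
    split; auto. intros p Hp.
    assert (Phi r (qf r p0) p <= Phi r (qf r p0) p0).
    { destruct (Rle_dec p p0).
      - apply Phi_left; try lra. intros c Hc.
        assert (HD := Dh_pos c ltac:(lra)).
        assert (qf r p0 <= qf r c) by (apply qf_mono; lra).
        assert (Df r c = qf r c * Dh c) by (unfold qf; field; lra). nra.
      - apply Phi_right; try lra. intros c Hc.
        destruct (Req_dec c (/2)). lra.
        assert (HD := Dh_pos c ltac:(lra)).
        assert (qf r c <= qf r p0) by (apply qf_mono; lra).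
        assert (Df r c = qf r c * Dh c) by (unfold qf; field; lra). nra. }
    unfold Phi in H. lra.
Qed.

Definition fB (r p : R) : R :=
  Rpower 2 (- r) * Rpower (rpow p (/ (1 + r)) + rpow (1 - p) (/ (1 + r))) (1 + r).

Lemma rpow_pos_eq x y : 0 < x -> rpow x y = exp (y * ln x).
Proof. intros. unfold rpow. destruct (Rle_dec x 0). lra. reflexivity. Qed.

Lemma rpow_0 y : rpow 0 y = 0.
Proof. unfold rpow. destruct (Rle_dec 0 0). auto. lra. Qed.

Lemma Rpower_1_base x : Rpower 1 x = 1.
Proof. unfold Rpower. rewrite ln_1, Rmult_0_r. apply exp_0. Qed.

Lemma fB_eq r p : 0 < p < 1 -> fB r p = fS r p.
Proof.
  intros. unfold fB, fS, Uf. rewrite !rpow_pos_eq by lra. unfold Rpower.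
  rewrite <- exp_plus. f_equal; try ring.
Qed.

Lemma fB_0 r : fB r 0 = Rpower 2 (- r).
Proof. unfold fB. rewrite rpow_0. replace (1 - 0) with 1 by ring.
  rewrite rpow_pos_eq by lra. rewrite ln_1, Rmult_0_r, exp_0, Rplus_0_l, Rpower_1_base. ring. Qed.

Lemma fB_sym r p : fB r (1 - p) = fB r p.
Proof. unfold fB. replace (1 - (1 - p)) with p by ring. rewrite (Rplus_comm (rpow p _)). reflexivity. Qed.

Lemma h_eq p : h p = hS p.
Proof. unfold h, hS, log2. assert (H := ln2_pos). field. lra. Qed.

Lemma h_sym p : h (1 - p) = h p.
Proof. unfold h. replace (1 - (1 - p)) with p by ring. ring. Qed.

Lemma log2_1 : log2 1 = 0.
Proof. unfold log2. rewrite ln_1. unfold Rdiv. ring. Qed.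

Lemma h_0 : h 0 = 0.
Proof. unfold h. replace (1 - 0) with 1 by ring. rewrite log2_1. ring. Qed.

Lemma ln_le_sub1 y : 0 < y -> ln y <= y - 1.
Proof. intros. assert (H1 := exp_ineq1_le (ln y)). rewrite exp_ln in H1 by auto. lra. Qed.

Lemma fS_ge r p : 0 <= r <= 1 -> 0 < p < 1 -> exp (- r * ln 2) <= fS r p.
Proof.
  intros Hr Hp. unfold fS, Uf.
  set (s := / (1 + r)).
  assert (Hs : 0 < s <= 1). { unfold s. split. apply Rinv_0_lt_compat; lra.
    rewrite <- Rinv_1. apply Rinv_le_contravar; lra. }
  assert (Hl1 : ln p < 0) by (rewrite <- ln_1; apply ln_increasing; lra).
  assert (Hl2 : ln (1-p) < 0) by (rewrite <- ln_1; apply ln_increasing; lra).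
  assert (p <= exp (s * ln p)).
  { rewrite <- (exp_ln p) at 1 by lra. destruct (Req_dec s 1). rewrite H, Rmult_1_l; lra.
    left. apply exp_increasing. assert (s < 1) by lra. nra. }
  assert (1 - p <= exp (s * ln (1-p))).
  { rewrite <- (exp_ln (1-p)) at 1 by lra. destruct (Req_dec s 1). rewrite H0, Rmult_1_l; lra.
    left. apply exp_increasing. assert (s < 1) by lra. nra. }
  assert (0 <= ln (exp (s * ln p) + exp (s * ln (1 - p)))).
  { rewrite <- ln_1. apply ln_le; lra. }
  destruct (Req_dec ((1 + r) * ln (exp (s * ln p) + exp (s * ln (1 - p)))) 0) as [E|E].
  - rewrite E, Rplus_0_r. lra.
  - left. apply exp_increasing. assert (0 <= (1 + r) * ln (exp (s * ln p) + exp (s * ln (1 - p)))) by nra.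
    lra.
Qed.

Lemma hS_small t : 0 < t < 1 -> hS (t * t) <= 3 * t / ln 2.
Proof.
  intros Ht. unfold hS. assert (H2 := ln2_pos).
  unfold Rdiv. apply Rmult_le_compat_r. left; apply Rinv_0_lt_compat; lra.
  assert (A : - (t*t) * ln (t*t) <= 2 * t).
  { rewrite ln_mult by lra.
    assert (B := ln_le_sub1 (/t) ltac:(apply Rinv_0_lt_compat; lra)). rewrite ln_Rinv in B by lra.
    assert (t * t * (- ln t) <= t * t * (/ t - 1)) by (apply Rmult_le_compat_l; nra).
    replace (t * t * (/t - 1)) with (t - t * t) in H by (field; lra). nra. }
  assert (C : - (1 - t*t) * ln (1 - t*t) <= t * t).
  { assert (B := ln_le_sub1 (/(1 - t*t)) ltac:(apply Rinv_0_lt_compat; nra)). rewrite ln_Rinv in B by nra.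
    assert ((1 - t*t) * (- ln (1 - t*t)) <= (1 - t*t) * (/(1 - t*t) - 1)) by (apply Rmult_le_compat_l; nra).
    replace ((1 - t*t) * (/(1 - t*t) - 1)) with (t * t) in H by (field; nra). nra. }
  nra.
Qed.

Lemma SL r p0 : 0 < r <= 1 -> 0 < p0 <= /2 ->
  exists k, 0 <= k /\ forall p, 0 <= p <= 1 -> fB r p <= fB r p0 + k * (h p - h p0).
Proof.
  intros Hr Hp0. destruct (SL_open r p0 ltac:(lra) Hp0) as [k [Hk HS]].
  exists k. split; auto.
  assert (Hmain : forall p, 0 <= p <= /2 -> fB r p <= fB r p0 + k * (h p - h p0)).
  { intros p Hp. rewrite !h_eq. rewrite (fB_eq r p0) by lra.
    destruct (Req_dec p 0) as [->|Hne].
    - rewrite fB_0. unfold Rpower.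
      replace (ln 2 * - r) with (- r * ln 2) by ring.
      assert (Hh0 : hS 0 = 0) by (rewrite <- h_eq; apply h_0). rewrite Hh0.
      apply Rnot_lt_le. intros Hlt.
      set (D := exp (- r * ln 2) - (fS r p0 + k * (0 - hS p0))).
      assert (HD : 0 < D) by (unfold D; lra).
      assert (H2 := ln2_pos).
      set (t := Rmin (/2) (D * ln 2 / (6 * k + 1))).
      assert (Ht1 : 0 < t). { unfold t. apply Rmin_glb_lt. lra. apply Rdiv_lt_0_compat; [nra|lra]. }
      assert (Ht2 : t <= /2) by apply Rmin_l.
      assert (Ht3 : t <= D * ln 2 / (6 * k + 1)) by apply Rmin_r.
      assert (G1 := HS (t * t) ltac:(nra)).
      assert (G2 := fS_ge r (t*t) ltac:(lra) ltac:(nra)).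
      assert (G3 := hS_small t ltac:(lra)).
      assert (G4 : k * hS (t * t) <= k * (3 * t / ln 2)) by (apply Rmult_le_compat_l; lra).
      assert (G5 : k * (3 * t / ln 2) < D).
      { apply (Rmult_le_compat_r ((6*k+1)/ln 2)) in Ht3; [|apply Rdiv_le_0_compat; lra].
        replace (D * ln 2 / (6 * k + 1) * ((6 * k + 1) / ln 2)) with D in Ht3 by (field; lra).
        replace (k * (3 * t / ln 2)) with (t * ((6*k+1)/ln 2) / 2 - t / ln 2 / 2) by (field; lra).
        assert (0 < t / ln 2 / 2) by (apply Rdiv_lt_0_compat; [apply Rdiv_lt_0_compat|]; lra).
        lra. }
      unfold D in *. lra.
    - rewrite fB_eq by lra. apply HS. lra. }
  intros p Hp. destruct (Rle_dec p (/2)).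
  - apply Hmain; lra.
  - rewrite <- fB_sym, <- h_sym. apply Hmain; lra.
Qed.

Lemma fB_r0 p : 0 <= p <= 1 -> fB 0 p = 1.
Proof.
  intros Hp. unfold fB. replace (/ (1 + 0)) with 1 by field. replace (1 + 0) with 1 by ring.
  replace (-0) with 0 by ring. rewrite Rpower_O by lra.
  assert (E : forall x, 0 <= x -> rpow x 1 = x).
  { intros x Hx. destruct (Req_dec x 0) as [->|]. apply rpow_0. rewrite rpow_pos_eq by lra.
    rewrite Rmult_1_l. apply exp_ln. lra. }
  rewrite !E by lra. replace (p + (1 - p)) with 1 by ring. rewrite Rpower_1 by lra. ring.
Qed.

Lemma fB_1 r : fB r 1 = Rpower 2 (- r).
Proof. replace 1 with (1 - 0) by ring. rewrite fB_sym. apply fB_0. Qed.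

Lemma h_1 : h 1 = 0.
Proof. replace 1 with (1 - 0) by ring. rewrite h_sym. apply h_0. Qed.

Lemma ln_half : ln (/2) = - ln 2.
Proof. apply ln_Rinv. lra. Qed.

Lemma h_half : h (/2) = 1.
Proof. unfold h, log2. replace (1 - /2) with (/2) by field. rewrite ln_half.
  assert (H := ln2_pos). field. lra. Qed.

Lemma fB_half r : -1 < r -> fB r (/2) = 1.
Proof.
  intros Hr. rewrite fB_eq by lra. unfold fS, Uf.
  replace (1 - /2) with (/2) by field. rewrite ln_half.
  replace (exp (/ (1 + r) * - ln 2) + exp (/ (1 + r) * - ln 2))
    with (exp ((1 - / (1+r)) * ln 2)).
  2:{ replace ((1 - / (1+r)) * ln 2) with (ln 2 + / (1 + r) * - ln 2) by ring.
      rewrite exp_plus, exp_ln by lra. ring. }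
  rewrite ln_exp. replace (- r * ln 2 + (1 + r) * ((1 - / (1 + r)) * ln 2)) with 0 by (field; lra).
  apply exp_0.
Qed.

Lemma h_pos p : 0 < p < 1 -> 0 < h p.
Proof.
  intros. rewrite h_eq. unfold hS. assert (H2 := ln2_pos).
  assert (ln p < 0) by (rewrite <- ln_1; apply ln_increasing; lra).
  assert (ln (1-p) < 0) by (rewrite <- ln_1; apply ln_increasing; lra).
  apply Rdiv_lt_0_compat; nra.
Qed.

Lemma h_range p : 0 <= p <= 1 -> 0 <= h p <= 1.
Proof.
  intros Hp. destruct (Req_dec p 0) as [->|]. rewrite h_0; lra.
  destruct (Req_dec p 1) as [->|]. rewrite h_1; lra.
  split. left; apply h_pos; lra.
  rewrite h_eq. unfold hS. assert (H2 := ln2_pos).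
  apply (Rmult_le_reg_r (ln 2)). auto. replace (1 * ln 2) with (ln 2) by ring.
  unfold Rdiv. rewrite Rmult_assoc, Rinv_l, Rmult_1_r by lra.
  assert (A := ln_le_sub1 (/ (2 * p)) ltac:(apply Rinv_0_lt_compat; lra)).
  assert (B := ln_le_sub1 (/ (2 * (1-p))) ltac:(apply Rinv_0_lt_compat; lra)).
  rewrite ln_Rinv, ln_mult in A, B by lra.
  assert (A' : p * (- (ln 2 + ln p)) <= p * (/ (2 * p) - 1)) by (apply Rmult_le_compat_l; lra).
  assert (B' : (1-p) * (- (ln 2 + ln (1-p))) <= (1-p) * (/ (2 * (1-p)) - 1)) by (apply Rmult_le_compat_l; lra).
  replace (p * (/ (2 * p) - 1)) with (/2 - p) in A' by (field; lra).
  replace ((1-p) * (/ (2 * (1-p)) - 1)) with (/2 - (1-p)) in B' by (field; lra).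
  nra.
Qed.

Lemma h_zero p : 0 <= p <= 1 -> h p = 0 -> p = 0 \/ p = 1.
Proof.
  intros. destruct (Req_dec p 0). auto. destruct (Req_dec p 1). auto.
  assert (0 < h p) by (apply h_pos; lra). lra.
Qed.

Lemma SL_all r p0 : 0 <= r <= 1 -> 0 < p0 <= /2 ->
  exists k, 0 <= k /\ forall p, 0 <= p <= 1 -> fB r p <= fB r p0 + k * (h p - h p0).
Proof.
  intros Hr Hp0. destruct (Req_dec r 0) as [->|Hr0].
  - exists 0. split. lra. intros p Hp. rewrite !fB_r0 by lra. lra.
  - apply SL; lra.
Qed.

Lemma two_pos_rpow r : 0 < Rpower 2 (- r).
Proof. apply exp_pos. Qed.

Lemma chord r p : 0 <= r <= 1 -> 0 <= p <= 1 ->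
  1 - (1 - Rpower 2 (- r)) * (1 - h p) <= fB r p.
Proof.
  intros Hr Hp.
  assert (Hmain : forall p, 0 <= p <= /2 -> 1 - (1 - Rpower 2 (- r)) * (1 - h p) <= fB r p).
  { clear p Hp. intros p Hp. destruct (Req_dec p 0) as [->|Hne].
    - rewrite h_0, fB_0. lra.
    - destruct (SL_all r p Hr ltac:(lra)) as [k [Hk HS]].
      assert (G1 := HS 0 ltac:(lra)). assert (G2 := HS (/2) ltac:(lra)).
      rewrite fB_0, h_0 in G1. rewrite fB_half, h_half in G2 by lra.
      assert (Hh := h_range p ltac:(lra)).
      assert (G3 : (1 - h p) * Rpower 2 (- r) <= (1 - h p) * (fB r p + k * (0 - h p))) by (apply Rmult_le_compat_l; lra).
      assert (G4 : h p * 1 <= h p * (fB r p + k * (1 - h p))) by (apply Rmult_le_compat_l; lra).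
      nra. }
  destruct (Rle_dec p (/2)). apply Hmain; lra.
  rewrite <- fB_sym, <- h_sym. apply Hmain; lra.
Qed.

Definition colF (r a b : R) : R :=
  / 2 * (if Rlt_dec 0 a then a * Rpower ((/ 2 * (rpow a (/ (1 + r)) + rpow b (/ (1 + r)))) / rpow a (/ (1 + r))) r else 0) +
  / 2 * (if Rlt_dec 0 b then b * Rpower ((/ 2 * (rpow a (/ (1 + r)) + rpow b (/ (1 + r)))) / rpow b (/ (1 + r))) r else 0).

Definition colC (a b : R) : R :=
  / 2 * (if Rlt_dec 0 a then a * log2 (a / (/ 2 * (a + b))) else 0) +
  / 2 * (if Rlt_dec 0 b then b * log2 (b / (/ 2 * (a + b))) else 0).

Lemma ln_div' x y : 0 < x -> 0 < y -> ln (x / y) = ln x - ln y.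
Proof. intros. unfold Rdiv. rewrite ln_mult, ln_Rinv; try lra. apply Rinv_0_lt_compat; auto. Qed.

Lemma colF_both r a b : -1 < r -> 0 < a -> 0 < b ->
  colF r a b = (a + b) / 2 * fB r (a / (a + b)).
Proof.
  intros Hr Ha Hb. unfold colF.
  destruct (Rlt_dec 0 a); [|lra]. destruct (Rlt_dec 0 b); [|lra].
  set (s := / (1 + r)).
  assert (Hs : (1 + r) * s = 1) by (unfold s; field; lra).
  rewrite !rpow_pos_eq by lra.
  set (A := exp (s * ln a)). set (B := exp (s * ln b)).
  assert (HA : 0 < A) by apply exp_pos. assert (HB : 0 < B) by apply exp_pos.
  set (M := / 2 * (A + B)). assert (HM : 0 < M) by (unfold M; lra).
  assert (E1 : a * Rpower (M / A) r = exp (s * ln a + r * ln M)).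
  { unfold Rpower. rewrite ln_div' by lra. unfold A. rewrite ln_exp.
    rewrite <- (exp_ln a) at 1 by lra. rewrite <- exp_plus. f_equal.
    replace s with (/(1+r)) by reflexivity. field. lra. }
  assert (E2 : b * Rpower (M / B) r = exp (s * ln b + r * ln M)).
  { unfold Rpower. rewrite ln_div' by lra. unfold B. rewrite ln_exp.
    rewrite <- (exp_ln b) at 1 by lra. rewrite <- exp_plus. f_equal.
    replace s with (/(1+r)) by reflexivity. field. lra. }
  rewrite E1, E2, !exp_plus. fold A B.
  rewrite fB_eq.
  2:{ split. apply Rdiv_lt_0_compat; lra. apply (Rmult_lt_reg_r (a+b)). lra.
      unfold Rdiv. rewrite Rmult_assoc, Rinv_l; lra. }
  unfold fS, Uf. fold s.
  replace (1 - a / (a + b)) with (b / (a + b)) by (field; lra).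
  rewrite !ln_div' by lra.
  set (t := a + b).
  replace (exp (s * (ln a - ln t)) + exp (s * (ln b - ln t))) with (2 * M * exp (- s * ln t)).
  2:{ unfold M, A, B. replace (s * (ln a - ln t)) with (s * ln a + - s * ln t) by ring.
      replace (s * (ln b - ln t)) with (s * ln b + - s * ln t) by ring. rewrite !exp_plus. field. }
  rewrite !ln_mult by (try apply exp_pos; lra). rewrite ln_exp.
  replace (t / 2) with (exp (ln t - ln 2)).
  2:{ rewrite exp_sub, !exp_ln by (unfold t; lra). field. }
  transitivity (exp (ln M + r * ln M)).
  { rewrite exp_plus, exp_ln by lra. unfold M. field. }
  rewrite <- exp_plus. f_equal.
  replace s with (/(1+r)) by reflexivity. field. lra.
Qed.

Lemma Rpower_half r : Rpower (/2) r = Rpower 2 (- r).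
Proof. unfold Rpower. rewrite ln_half. f_equal. ring. Qed.

Lemma colF_form r a b : -1 < r -> 0 <= a -> 0 <= b -> 0 < a + b ->
  colF r a b = (a + b) / 2 * fB r (a / (a + b)).
Proof.
  intros Hr Ha Hb Ht.
  destruct (Req_dec a 0) as [->|Ha0].
  - unfold colF. destruct (Rlt_dec 0 0); [lra|]. destruct (Rlt_dec 0 b); [|lra].
    rewrite rpow_0, Rplus_0_l. replace (0 / (0 + b)) with 0 by (field; lra). rewrite fB_0.
    assert (0 < rpow b (/ (1 + r))) by (rewrite rpow_pos_eq by lra; apply exp_pos).
    replace (/ 2 * rpow b (/ (1 + r)) / rpow b (/ (1 + r))) with (/2) by (field; lra).
    rewrite Rpower_half. field.
  - destruct (Req_dec b 0) as [->|Hb0].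
    + unfold colF. destruct (Rlt_dec 0 0); [lra|]. destruct (Rlt_dec 0 a); [|lra].
      rewrite rpow_0, Rplus_0_r. replace (a / (a + 0)) with 1 by (field; lra). rewrite fB_1.
      assert (0 < rpow a (/ (1 + r))) by (rewrite rpow_pos_eq by lra; apply exp_pos).
      replace (/ 2 * rpow a (/ (1 + r)) / rpow a (/ (1 + r))) with (/2) by (field; lra).
      rewrite Rpower_half. field.
    + apply colF_both; lra.
Qed.

Lemma colF_00 r : colF r 0 0 = 0.
Proof. unfold colF. destruct (Rlt_dec 0 0); [lra|]. ring. Qed.

Lemma colC_00 : colC 0 0 = 0.
Proof. unfold colC. destruct (Rlt_dec 0 0); [lra|]. ring. Qed.

Lemma colC_form a b : 0 <= a -> 0 <= b -> 0 < a + b ->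
  colC a b = (a + b) / 2 * (1 - h (a / (a + b))).
Proof.
  intros Ha Hb Ht. assert (H2 := ln2_pos). unfold colC.
  destruct (Req_dec a 0) as [->|Ha0].
  - destruct (Rlt_dec 0 0); [lra|]. destruct (Rlt_dec 0 b); [|lra].
    replace (0 / (0 + b)) with 0 by (field; lra). rewrite h_0.
    replace (b / (/ 2 * (0 + b))) with 2 by (field; lra). unfold log2. field. lra.
  - destruct (Req_dec b 0) as [->|Hb0].
    + destruct (Rlt_dec 0 0); [lra|]. destruct (Rlt_dec 0 a); [|lra].
      replace (a / (a + 0)) with 1 by (field; lra). rewrite h_1.
      replace (a / (/ 2 * (a + 0))) with 2 by (field; lra). unfold log2. field. lra.
    + destruct (Rlt_dec 0 a); [|lra]. destruct (Rlt_dec 0 b); [|lra].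
      unfold h. replace (1 - a / (a + b)) with (b / (a + b)) by (field; lra).
      unfold log2. rewrite !ln_div' by lra. rewrite ln_mult by lra. rewrite ln_Rinv by lra.
      field. split; lra.
Qed.

Definition sumL (f : nat -> R) (l : list nat) := fold_right Rplus 0 (map f l).

Lemma sumL_plus f g l : sumL (fun y => f y + g y) l = sumL f l + sumL g l.
Proof. induction l; unfold sumL in *; simpl; [ring|]. rewrite IHl. ring. Qed.

Lemma sumL_scal c f l : sumL (fun y => c * f y) l = c * sumL f l.
Proof. induction l; unfold sumL in *; simpl; [ring|]. rewrite IHl. ring. Qed.

Lemma sumL_le f g l : (forall y, In y l -> f y <= g y) -> sumL f l <= sumL g l.
Proof. induction l; intros H; unfold sumL in *; simpl. lra.
  assert (f a <= g a) by (apply H; left; auto).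
  assert (fold_right Rplus 0 (map f l) <= fold_right Rplus 0 (map g l)) by (apply IHl; intros; apply H; right; auto).
  lra. Qed.

Lemma sumL_ext f g l : (forall y, In y l -> f y = g y) -> sumL f l = sumL g l.
Proof. intros. apply Rle_antisym; apply sumL_le; intros; rewrite H; auto; lra. Qed.

Lemma sumL_nonneg f l : (forall y, In y l -> 0 <= f y) -> 0 <= sumL f l.
Proof. intros. replace 0 with (sumL (fun _ => 0) l). apply sumL_le; auto.
  induction l; unfold sumL in *; simpl; auto. rewrite IHl. ring. intros; apply H; right; auto. Qed.

Lemma sumL_zero f l : (forall y, In y l -> 0 <= f y) -> sumL f l = 0 -> forall y, In y l -> f y = 0.
Proof.
  induction l; intros H Hs y Hy. destruct Hy.
  unfold sumL in Hs; simpl in Hs. fold (sumL f l) in Hs.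
  assert (0 <= sumL f l) by (apply sumL_nonneg; intros; apply H; right; auto).
  assert (0 <= f a) by (apply H; left; auto).
  destruct Hy as [<-|Hy]. lra. apply IHl; auto. intros; apply H; right; auto. lra.
Qed.

Lemma sumY_sumL n f : sumY n f = sumL f (seq 0 n).
Proof. reflexivity. Qed.

Lemma in_seq0 n y : In y (seq 0 n) -> (y < n)%nat.
Proof. intros H. apply in_seq in H. lia. Qed.

Lemma F_col n W r : F n W r = sumY n (fun y => colF r (W false y) (W true y)).
Proof.
  unfold F, sumX, sumYpos, colF. rewrite !sumY_sumL.
  rewrite sumL_plus, !sumL_scal. reflexivity.
Qed.

Lemma C_col n W : capacity n W = sumY n (fun y => colC (W false y) (W true y)).
Proof.
  unfold capacity, sumX, sumYpos, colC. rewrite !sumY_sumL.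
  rewrite sumL_plus, !sumL_scal. reflexivity.
Qed.

Lemma tot_col n W : is_channel n W -> sumY n (fun y => (W false y + W true y) / 2) = 1.
Proof.
  intros [_ H]. rewrite sumY_sumL.
  replace (fun y => (W false y + W true y) / 2) with (fun y => /2 * (W false y + W true y)).
  2:{ apply functional_extensionality. intros; unfold Rdiv; ring. }
  rewrite sumL_scal, sumL_plus. rewrite <- !sumY_sumL. rewrite !H. field.
Qed.

Lemma p_range a b : 0 <= a -> 0 <= b -> 0 < a + b -> 0 <= a / (a + b) <= 1.
Proof. intros. split. apply Rdiv_le_0_compat; lra.
  apply (Rmult_le_reg_r (a+b)). lra. unfold Rdiv. rewrite Rmult_assoc, Rinv_l; lra. Qed.

Lemma colC_bounds a b : 0 <= a -> 0 <= b -> 0 <= colC a b <= (a + b) / 2.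
Proof.
  intros Ha Hb. destruct (Req_dec (a + b) 0).
  { assert (a = 0) by lra. assert (b = 0) by lra. subst. rewrite colC_00. lra. }
  rewrite colC_form by lra. assert (Hh := h_range _ (p_range a b Ha Hb ltac:(lra))).
  split. apply Rmult_le_pos; lra. assert (0 <= (a+b)/2) by lra. nra.
Qed.

Lemma colU r a b p0 k : -1 < r -> 0 <= a -> 0 <= b ->
  (forall p, 0 <= p <= 1 -> fB r p <= fB r p0 + k * (h p - h p0)) ->
  colF r a b <= (a + b) / 2 * (fB r p0 - k * h p0 + k) - k * colC a b.
Proof.
  intros Hr Ha Hb HS. destruct (Req_dec (a + b) 0).
  { assert (a = 0) by lra. assert (b = 0) by lra. subst. rewrite colF_00, colC_00. lra. }
  rewrite colF_form, colC_form by lra.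
  assert (G := HS _ (p_range a b Ha Hb ltac:(lra))).
  assert (0 <= (a+b)/2) by lra.
  assert (G2 := Rmult_le_compat_l _ _ _ H0 G). nra.
Qed.

Lemma colL r a b : 0 <= r <= 1 -> 0 <= a -> 0 <= b ->
  (a + b) / 2 - (1 - Rpower 2 (- r)) * colC a b <= colF r a b.
Proof.
  intros Hr Ha Hb. destruct (Req_dec (a + b) 0).
  { assert (a = 0) by lra. assert (b = 0) by lra. subst. rewrite colF_00, colC_00. lra. }
  rewrite colF_form, colC_form by lra.
  assert (G := chord r _ Hr (p_range a b Ha Hb ltac:(lra))).
  assert (0 <= (a+b)/2) by lra.
  assert (G2 := Rmult_le_compat_l _ _ _ H0 G). nra.
Qed.

Lemma colZ r a b : -1 < r -> 0 <= a -> 0 <= b -> (a + b) / 2 - colC a b = 0 ->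
  colF r a b = (a + b) / 2 * Rpower 2 (- r).
Proof.
  intros Hr Ha Hb HZ. destruct (Req_dec (a + b) 0).
  { assert (a = 0) by lra. assert (b = 0) by lra. subst. rewrite colF_00. lra. }
  rewrite colF_form by lra. rewrite colC_form in HZ by lra.
  assert (Hp := p_range a b Ha Hb ltac:(lra)).
  assert (h (a / (a + b)) = 0).
  { assert ((a + b) / 2 * h (a / (a + b)) = 0) by lra.
    apply Rmult_integral in H0. destruct H0; lra. }
  destruct (h_zero _ Hp H0) as [E|E]; rewrite E. rewrite fB_0; auto. rewrite fB_1; auto.
Qed.

Lemma h_cont a : 0 < a < 1 -> forall v, continuity_pt (fun x => h x - v) a.
Proof.
  intros Ha v.
  assert (E : (fun x => h x - v) = (fun x => hS x - v)).
  { apply functional_extensionality; intros; rewrite h_eq; auto. }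
  rewrite E. apply derivable_continuous_pt.
  exists (Dh a). apply is_derive_Reals. unfold hS, Dh. assert (H := ln2_pos).
  auto_derive. repeat split; lra. replace (1 + - a) with (1 - a) by ring. field. repeat split; lra.
Qed.

Lemma hinv_exists v : 0 <= v <= 1 -> exists e, 0 <= e <= /2 /\ h e = v.
Proof.
  intros Hv. destruct (Req_dec v 0) as [->|Hv0]. { exists 0. split. lra. apply h_0. }
  destruct (Req_dec v 1) as [->|Hv1]. { exists (/2). split. lra. apply h_half. }
  assert (H2 := ln2_pos).
  set (t := Rmin (/2) (v * ln 2 / 6)).
  assert (Ht1 : 0 < t). { unfold t. apply Rmin_glb_lt. lra. apply Rdiv_lt_0_compat; [nra|lra]. }
  assert (Ht2 : t <= /2) by apply Rmin_l.
  assert (Ht3 : t <= v * ln 2 / 6) by apply Rmin_r.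
  assert (G : h (t * t) < v).
  { rewrite h_eq. apply (Rle_lt_trans _ _ _ (hS_small t ltac:(lra))).
    apply (Rmult_le_compat_r (3 / ln 2)) in Ht3; [|apply Rdiv_le_0_compat; lra].
    replace (v * ln 2 / 6 * (3 / ln 2)) with (v / 2) in Ht3 by (field; lra).
    replace (3 * t / ln 2) with (t * (3 / ln 2)) by (field; lra). lra. }
  destruct (IVT_interv (fun x => h x - v) (t * t) (/2)) as [z [Hz1 Hz2]].
  - intros a Ha. apply h_cont. nra.
  - nra.
  - lra.
  - rewrite h_half. lra.
  - exists z. split. nra. lra.
Qed.

Lemma hinv_spec v : 0 <= v <= 1 -> 0 <= hinv v <= /2 /\ h (hinv v) = v.
Proof.
  intros Hv. unfold hinv. apply epsilon_spec. apply hinv_exists; auto.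
Qed.

Lemma F_bsc_fB r C : F_bsc r C = fB r (hinv (1 - C)).
Proof. reflexivity. Qed.

Lemma chan_nonneg n W : is_channel n W -> forall x y, In y (seq 0 n) -> 0 <= W x y.
Proof. intros [H _] x y Hy. apply H. apply in_seq0; auto. Qed.

Lemma pointwise n W r : is_channel n W -> 0 <= r <= 1 ->
  (0 <= capacity n W <= 1) /\
  F_bec r (capacity n W) <= F n W r /\ F n W r <= F_bsc r (capacity n W).
Proof.
  intros Hch Hr.
  assert (Hnn := chan_nonneg n W Hch).
  assert (HT := tot_col n W Hch). rewrite sumY_sumL in HT.
  rewrite F_col, C_col, !sumY_sumL.
  set (l := seq 0 n) in *.
  set (T := fun y => (W false y + W true y) / 2) in *.
  set (Cy := fun y => colC (W false y) (W true y)).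
  set (Fy := fun y => colF r (W false y) (W true y)).
  assert (HCb : forall y, In y l -> 0 <= Cy y <= T y).
  { intros y Hy. apply colC_bounds; apply Hnn; auto. }
  assert (Csum : 0 <= sumL Cy l <= 1).
  { split. apply sumL_nonneg; intros; apply HCb; auto.
    rewrite <- HT. apply sumL_le; intros; apply HCb; auto. }
  split; [auto|]. set (C := sumL Cy l) in *.
  split.
  -
    unfold F_bec.
    assert (sumL (fun y => T y + (- (1 - Rpower 2 (- r))) * Cy y) l <= sumL Fy l).
    { apply sumL_le. intros y Hy. unfold T, Cy, Fy.
      assert (G := colL r _ _ Hr (Hnn false y Hy) (Hnn true y Hy)). lra. }
    rewrite sumL_plus, sumL_scal, HT in H. fold C in H. lra.
  -
    rewrite F_bsc_fB.
    destruct (hinv_spec (1 - C) ltac:(lra)) as [He Hhe].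
    set (e := hinv (1 - C)) in *.
    destruct (Req_dec e 0) as [E0|Ene].
    + rewrite E0 in Hhe |- *. rewrite h_0 in Hhe.
      assert (HZ : sumL (fun y => T y + (-1) * Cy y) l = 0).
      { rewrite sumL_plus, sumL_scal, HT. fold C. lra. }
      assert (HZ2 := sumL_zero (fun y => T y + -1 * Cy y) l ltac:(intros y Hy; specialize (HCb y Hy); lra) HZ).
      rewrite (sumL_ext Fy (fun y => Rpower 2 (- r) * T y)).
      * rewrite sumL_scal, HT, fB_0. lra.
      * intros y Hy. unfold Fy, T. rewrite colZ; try apply Hnn; auto; try lra.
        specialize (HZ2 y Hy). unfold T, Cy in HZ2. lra.
    + destruct (SL_all r e Hr ltac:(lra)) as [k [Hk HS]].
      assert (sumL Fy l <= sumL (fun y => (fB r e - k * h e + k) * T y + (- k) * Cy y) l).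
      { apply sumL_le. intros y Hy. unfold T, Cy, Fy.
        assert (G := colU r _ _ e k ltac:(lra) (Hnn false y Hy) (Hnn true y Hy) HS). lra. }
      rewrite sumL_plus, !sumL_scal, HT in H. fold C in H. rewrite Hhe in H. lra.
Qed.

Lemma max01_lub f B : (forall rho, 0 <= rho <= 1 -> f rho <= B) ->
  is_lub (fun v => exists rho, 0 <= rho <= 1 /\ v = f rho) (max01 f).
Proof.
  intros HB. unfold max01. apply epsilon_spec.
  destruct (completeness (fun v => exists rho, 0 <= rho <= 1 /\ v = f rho)) as [m Hm].
  - exists B. intros v [rho [Hr ->]]. apply HB; auto.
  - exists (f 0). exists 0. split; [lra|auto].
  - exists m; auto.
Qed.

Lemma max01_le f g B : (forall rho, 0 <= rho <= 1 -> f rho <= g rho) ->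
  (forall rho, 0 <= rho <= 1 -> g rho <= B) -> max01 f <= max01 g.
Proof.
  intros Hfg HB.
  assert (Hg := max01_lub g B HB).
  assert (Hf := max01_lub f B ltac:(intros; apply (Rle_trans _ (g rho)); auto)).
  destruct Hf as [_ Hf]. apply Hf. intros v [rho [Hr ->]].
  apply (Rle_trans _ (g rho)); auto. destruct Hg as [Hg _]. apply Hg. exists rho; auto.
Qed.

Lemma log2_le x y : 0 < x -> x <= y -> log2 x <= log2 y.
Proof. intros. unfold log2. assert (H1 := ln2_pos). unfold Rdiv.
  apply Rmult_le_compat_r. left; apply Rinv_0_lt_compat; auto. apply ln_le; auto. Qed.

Lemma log2_pow r : log2 (Rpower 2 (- r)) = - r.
Proof. unfold log2. rewrite ln_Rpower. assert (H := ln2_pos). field. lra. Qed.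

Lemma Fbec_ge r C : 0 <= r -> 0 <= C <= 1 -> Rpower 2 (- r) <= F_bec r C.
Proof.
  intros Hr HC. unfold F_bec.
  assert (Rpower 2 (- r) <= 1).
  { unfold Rpower. rewrite <- exp_0. destruct (Req_dec r 0) as [->|].
    replace (-0 * ln 2) with 0 by ring. lra.
    left. apply exp_increasing. assert (H2 := ln2_pos). nra. }
  nra.
Qed.

Theorem mainTheorem8 (n : nat) (W : bool -> nat -> R) :
  is_channel n W -> gallager_symmetric n W ->
  forall Rt : R, 0 <= Rt ->
    Er_bsc Rt (capacity n W) <= Er n W Rt /\
    Er n W Rt <= Er_bec Rt (capacity n W).
Proof.
  intros Hch _ Rt HRt.
  assert (P := fun r Hr => pointwise n W r Hch Hr).
  assert (Fpos : forall r, 0 <= r <= 1 -> Rpower 2 (- r) <= F n W r).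
  { intros r Hr. destruct (P r Hr) as [HC [H1 H2]].
    apply (Rle_trans _ _ _ (Fbec_ge r _ ltac:(lra) HC)); auto. }
  assert (Ebound : forall r, 0 <= r <= 1 -> E0 n W r - r * Rt <= 1).
  { intros r Hr. unfold E0. assert (G := log2_le _ _ (exp_pos _) (Fpos r Hr)).
    try change (exp (- r * ln 2)) with (Rpower 2 (- r)) in G. rewrite log2_pow in G. nra. }
  split.
  - unfold Er_bsc, Er. apply (max01_le _ _ 1); auto.
    intros r Hr. destruct (P r Hr) as [HC [H1 H2]]. unfold E0.
    assert (log2 (F n W r) <= log2 (F_bsc r (capacity n W))).
    { apply log2_le; auto. apply (Rlt_le_trans _ (Rpower 2 (- r))). apply exp_pos. auto. }
    lra.
  - unfold Er_bec, Er. apply (max01_le _ _ 1).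
    + intros r Hr. destruct (P r Hr) as [HC [H1 H2]]. unfold E0.
      assert (log2 (F_bec r (capacity n W)) <= log2 (F n W r)).
      { apply log2_le; auto. apply (Rlt_le_trans _ (Rpower 2 (- r))). apply exp_pos.
        apply Fbec_ge; lra. }
      lra.
    + intros r Hr. destruct (P r Hr) as [HC [H1 H2]].
      assert (G := log2_le _ _ (exp_pos _) (Fbec_ge r _ ltac:(lra) HC)).
      try change (exp (- r * ln 2)) with (Rpower 2 (- r)) in G. rewrite log2_pow in G. nra.
Qed.
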